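(* Let $B$ be a boolean algebra, $(\mathcal L,i)$ the free frame on ${\sf Filt}(B)$ as in the context, and define $e:B\to\mathfrak B(\mathcal L)$ by $e(b)=i({\uparrow}b)$. Then $e$ is a well-defined injective boolean homomorphism, and the pair $(\mathfrak B(\mathcal L),e)$ is a canonical extension of $B$; that is, $e$ is dense and compact.
   Context: ${\sf Filt}(B)$ is the set of filters of $B$ ordered by reverse inclusion; it is a meet-semilattice with top $\{1\}$ and bottom $B$. Concretely, $\mathcal L$ is the frame of all subsets of the set of proper filters of $B$ that are closed upward under inclusion, ordered by inclusion, and $i(F)=\{G\text{ proper filter}\mid F\subseteq G\}$; $(\mathcal L,i)$ is the free frame on ${\sf Filt}(B)$. For a frame $L$, $a^*=\bigvee\{s\mid a\wedge s=0\}$ and $\mathfrak B(L)=\{a^{**}\mid a\in L\}$ is the booleanization, a complete boolean algebra with meets as in $L$ and joins $(\bigvee S)^{**}$. For a boolean algebra $B$, a complete boolean algebra $C$ and an injective boolean homomorphism $e:B\to C$: $e$ is compact if whenever $S,T\subseteq B$ with $\bigwedge e[S]\le\bigvee e[T]$ there are finite $S_0\subseteq S$, $T_0\subseteq T$ with $\bigwedge S_0\le\bigvee T_0$; $e$ is dense if every element of $C$ is a join of meets of elements of $e[B]$; $(C,e)$ is a canonical extension if $e$ is dense and compact. *)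

(* Defs.v *)
From mathcomp Require Import all_boot all_order.
Set Implicit Arguments. Unset Strict Implicit. Unset Printing Implicit Defensive.
Import Order.Theory.
Local Open Scope order_scope.

Definition pset (T : Type) := T -> Prop.
Definition psubset (T : Type) (A C : pset T) := forall x, A x -> C x.

Section BoolFrame.
Context {d : Order.disp_t} (B : ctbDistrLatticeType d).

Definition is_filter (F : pset B) : Prop :=
  [/\ F \top,
      (forall x y : B, F x -> x <= y -> F y) &
      (forall x y : B, F x -> F y -> F (x `&` y))].

Definition proper_filter (F : pset B) : Prop := is_filter F /\ ~ F \bot.

Definition upb (b : B) : pset B := fun x => b <= x.

(* Elements of the frame L: subsets of the set of proper filters that are
   closed upward under inclusion. L is ordered by inclusion; its meets are
   intersections (empty meet = all proper filters), joins are unions. *)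
Definition Lelem (U : pset (pset B)) : Prop :=
  (forall G, U G -> proper_filter G) /\
  (forall G H, U G -> proper_filter H -> psubset G H -> U H).

Definition iota (F : pset B) : pset (pset B) :=
  fun G => proper_filter G /\ psubset F G.

Definition Ltop : pset (pset B) := proper_filter.
Definition Lbot : pset (pset B) := fun _ => False.

Definition pc (a : pset (pset B)) : pset (pset B) :=
  fun G => exists s, [/\ Lelem s,
                        (forall H, ~ (a H /\ s H)) & s G].

Definition inBool (x : pset (pset B)) : Prop :=
  exists a, Lelem a /\ x = pc (pc a).

(* Meets in B(L) are as in L: intersection, empty meet = top of L. *)
Definition bmeet (S : pset (pset (pset B))) : pset (pset B) :=
  fun G => proper_filter G /\ forall s, S s -> s G.

Definition bjoin (S : pset (pset (pset B))) : pset (pset B) :=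
  pc (pc (fun G => exists s, S s /\ s G)).

Definition pair_set (T : Type) (a c : T) : pset T := fun x => x = a \/ x = c.
Definition empty_set (T : Type) : pset T := fun _ => False.
Definition image (T U : Type) (f : T -> U) (S : pset T) : pset U :=
  fun y => exists2 x, S x & y = f x.

Definition emb (b : B) : pset (pset B) := iota (upb b).

(* e is a boolean homomorphism B -> B(L) (the operations of B(L) being
   bmeet / bjoin, complement = boolean complement in B(L)). *)
Definition bool_hom (f : B -> pset (pset B)) : Prop :=
  [/\ forall a b : B, f (a `&` b) = bmeet (pair_set (f a) (f b)),
      forall a b : B, f (a `|` b) = bjoin (pair_set (f a) (f b)),
      f \bot = bjoin (@empty_set _),
      f \top = bmeet (@empty_set _) &
      forall a : B,
        bmeet (pair_set (f a) (f (~` a))) = bjoin (@empty_set _) /\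
        bjoin (pair_set (f a) (f (~` a))) = bmeet (@empty_set _)].

Definition compact_emb (f : B -> pset (pset B)) : Prop :=
  forall S T : pset B,
    psubset (bmeet (image f S)) (bjoin (image f T)) ->
    exists (S0 T0 : seq B),
      [/\ (forall x, x \in S0 -> S x),
          (forall y, y \in T0 -> T y) &
          \meet_(x <- S0) x <= \join_(y <- T0) y].

Definition dense_emb (f : B -> pset (pset B)) : Prop :=
  forall x, inBool x ->
    exists Fam : pset (pset B),
      x = bjoin (fun y => exists2 S, Fam S & y = bmeet (image f S)).

End BoolFrame.

(* Main.v *)
Require Import Defs.
From mathcomp Require Import all_boot all_order.
From Stdlib Require Import Classical FunctionalExtensionality PropExtensionality.
Set Implicit Arguments. Unset Strict Implicit. Unset Printing Implicit Defensive.
Import Order.Theory.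
Local Open Scope order_scope.

Section S.
Context {d : Order.disp_t} (B : ctbDistrLatticeType d).
Implicit Types (G H K F : pset B) (a y : pset (pset B)) (c : B).

Lemma pext (x y : pset (pset B)) : (forall G, x G <-> y G) -> x = y.
Proof.
move=> h; apply: functional_extensionality => G.
apply: propositional_extensionality; exact: h.
Qed.

Definition upc a := forall G H, a G -> proper_filter H -> psubset G H -> a H.

Lemma pcE a G : pc a G <->
  proper_filter G /\ forall H, proper_filter H -> psubset G H -> ~ a H.
Proof.
split.
- case=> s [[sP sU] dis sG]; split; first exact: sP.
  move=> H pH GH aH; apply: (dis H); split=> //; exact: sU sG pH GH.
- case=> pG hG.
  exists (fun G' => proper_filter G' /\
            forall H, proper_filter H -> psubset G' H -> ~ a H); split.
  + split; first by move=> ? [].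
    move=> G1 H1 [pG1 h1] pH1 sub; split=> // K pK HK.
    exact: h1 pK (fun x hx => HK x (sub x hx)).
  + move=> H [aH [pH hH]]; exact: hH H pH (fun x hx => hx) aH.
  + by split.
Qed.

Lemma pc_proper a G : pc a G -> proper_filter G.
Proof. by case/pcE. Qed.

Lemma pc_up a : upc (pc a).
Proof.
move=> G H /pcE [pG h] pH GH; apply/pcE; split=> // K pK HK.
exact: h K pK (fun x hx => HK x (GH x hx)).
Qed.

Lemma up_pcpc a : upc a -> forall G, proper_filter G -> a G -> pc (pc a) G.
Proof.
move=> ua G pG aG; apply/pcE; split=> // H pH GH /pcE [_ h].
exact: (h H pH (fun x hx => hx)) (ua G H aG pH GH).
Qed.

Lemma pc_anti a y : (forall G, proper_filter G -> a G -> y G) ->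
  forall G, pc y G -> pc a G.
Proof.
move=> ay G /pcE [pG h]; apply/pcE; split=> // H pH GH aH.
exact: h H pH GH (ay H pH aH).
Qed.

Lemma ppp a : upc a -> pc (pc (pc a)) = pc a.
Proof.
move=> ua; apply: pext => G; split.
- apply: pc_anti => H pH aH; exact: up_pcpc.
- move=> h; apply: up_pcpc => //; [exact: pc_up | exact: pc_proper h].
Qed.

Definition gen G (c : B) : pset B := fun x => exists2 g, G g & g `&` c <= x.

Lemma gen_filter G c : is_filter G -> is_filter (gen G c).
Proof.
case=> Gt Gu Gm; split.
- by exists \top => //; rewrite lex1.
- move=> x y [g Gg h] xy; exists g => //; exact: le_trans h xy.
- move=> x y [g1 G1 h1] [g2 G2 h2]; exists (g1 `&` g2); first exact: Gm.
  rewrite lexI; apply/andP; split.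
  + apply: le_trans h1; apply: leI2 => //; exact: leIl.
  + apply: le_trans h2; apply: leI2 => //; exact: leIr.
Qed.

Lemma gen_sub G c : psubset G (gen G c).
Proof. by move=> x Gx; exists x => //; exact: leIl. Qed.

Lemma gen_c G c : is_filter G -> gen G c c.
Proof. by case=> Gt _ _; exists \top => //; exact: leIr. Qed.

Lemma key (c g : B) : g `&` ~` c <= \bot -> g <= c.
Proof.
move=> h.
have -> : g = (g `&` c) `|` (g `&` ~` c) by rewrite -meetUr joinxC meetx1.
rewrite leUx leIr /=; exact: le_trans h (le0x _).
Qed.

Lemma memb c G : emb c G <-> proper_filter G /\ G c.
Proof.
split.
- by case=> pG s; split=> //; apply: s; exact: lexx.
- case=> pG Gc; split=> // x cx.
  by case: pG => [[_ Gu _] _]; exact: Gu Gc cx.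
Qed.

Lemma emb_up c : upc (emb c).
Proof.
move=> G H /memb [pG Gc] pH GH; apply/memb; split=> //; exact: GH.
Qed.

Lemma emb_reg c : pc (pc (emb c)) = emb c.
Proof.
apply: pext => G; split.
- move=> /pcE [pG h]; apply/memb; split=> //.
  apply: NNPP => nGc.
  have fG := pG.1.
  have pH : proper_filter (gen G (~` c)).
    split; first exact: gen_filter.
    case=> g Gg hg; apply: nGc; case: fG => _ Gu _; apply: Gu Gg _; exact: key.
  apply: (h _ pH (@gen_sub G (~` c))); apply/pcE; split=> // K pK HK /memb [_ Kc].
  have Knc : K (~` c) by apply: HK; exact: gen_c.
  case: pK => [[_ _ Km] nb]; apply: nb; rewrite -(meetxC c); exact: Km.
- move=> h; apply: up_pcpc => //; [exact: emb_up | exact: (proj1 (memb c G) h).1].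
Qed.

Lemma emb_meet (a b : B) : emb (a `&` b) = bmeet (pair_set (emb a) (emb b)).
Proof.
apply: pext => G; rewrite memb; split.
- case=> pG Gab; split=> // s [->|->]; apply/memb; split=> //;
  case: pG => [[_ Gu _] _]; apply: Gu Gab _; [exact: leIl | exact: leIr].
- case=> pG h.
  have /memb [_ Ga] := h _ (or_introl erefl).
  have /memb [_ Gb] := h _ (or_intror erefl).
  split=> //; case: pG => [[_ _ Gm] _]; exact: Gm.
Qed.

Lemma emb_join (a b : B) : emb (a `|` b) = bjoin (pair_set (emb a) (emb b)).
Proof.
apply: pext => G; split.
- move/memb => [pG Gab]; apply/pcE; split=> // H pH GH /pcE [_ hU].
  have fH := pH.1.
  have gen_ok : forall c, ~ (exists2 h, H h & h `&` c <= \bot) ->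
      (emb c = emb a \/ emb c = emb b) -> False.
    move=> c nc ec.
    have pK : proper_filter (gen H c) by split; [exact: gen_filter | exact: nc].
    apply: (hU _ pK (@gen_sub H c)); exists (emb c); split; first exact: ec.
    apply/memb; split=> //; exact: gen_c.
  case: (classic (exists2 h, H h & h `&` a <= \bot)); last first.
    by move=> na; apply: gen_ok na _; left.
  case=> h1 Hh1 h1a.
  case: (classic (exists2 h, H h & h `&` b <= \bot)); last first.
    by move=> nb; apply: gen_ok nb _; right.
  case=> h2 Hh2 h2b.
  case: pH => [[_ Hu Hm] nb]; apply: nb.
  have Hab : H (a `|` b) by exact: GH.
  apply: Hu (Hm _ _ (Hm _ _ Hh1 Hh2) Hab) _.
  rewrite meetUr leUx; apply/andP; split.
  + apply: le_trans h1a; apply: leI2 => //; exact: leIl.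
  + apply: le_trans h2b; apply: leI2 => //; exact: leIr.
- move=> h; suff: pc (pc (emb (a `|` b))) G by rewrite emb_reg.
  move: h; apply: pc_anti => H pH; apply: pc_anti => K pK [s [[->|->] /memb [_ Ks]]];
  apply/memb; split=> //; case: pK => [[_ Ku _] _]; apply: Ku Ks _;
  [exact: leUl | exact: leUr].
Qed.

Lemma emb_bot : emb (\bot : B) = bjoin (@empty_set _).
Proof.
apply: pext => G; split.
- by move/memb => [[_ nb] G0].
- move/pcE => [pG h]; exfalso; apply: (h G pG (fun x hx => hx)).
  by apply/pcE; split=> // H _ _ [s []].
Qed.

Lemma emb_top : emb (\top : B) = bmeet (@empty_set _).
Proof.
apply: pext => G; rewrite memb; split.
- by case=> pG _; split=> // s [].
- by case=> pG _; split=> //; case: pG => [[]].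
Qed.

Lemma upb_proper (b : B) : b != \bot -> proper_filter (upb b).
Proof.
move=> nb; split; first split.
- exact: lex1.
- move=> x y bx xy; exact: le_trans bx xy.
- by move=> x y bx by'; rewrite /upb lexI bx.
- by rewrite /upb lex0 (negbTE nb).
Qed.

Lemma emb_inj : injective (@emb d B).
Proof.
have H1 : forall a b : B, emb a = emb b -> b <= a.
  move=> a b e; case: (eqVneq b \bot) => [->|nb]; first exact: le0x.
  have : emb b (upb b) by apply/memb; split; [exact: upb_proper | exact: lexx].
  by rewrite -e => /memb [_].
move=> a b e; apply: le_anti; rewrite (H1 _ _ e) (H1 _ _ (esym e)) //.
Qed.

End S.

Theorem mainTheorem3 (d : Order.disp_t) (B : ctbDistrLatticeType d) :
  [/\ forall b : B, inBool (emb b),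
      injective (@emb d B),
      bool_hom (@emb d B),
      dense_emb (@emb d B) &
      compact_emb (@emb d B)].
Proof.
split.
- move=> b; exists (emb b); split; last by rewrite emb_reg.
  split; first by move=> G [].
  exact: emb_up.
- exact: emb_inj.
- split.
  + exact: emb_meet.
  + exact: emb_join.
  + exact: emb_bot.
  + exact: emb_top.
  + move=> a; split.
    * rewrite -emb_bot; apply: pext => G; split.
      - case=> pG h.
        have /memb [_ Ga] := h _ (or_introl erefl).
        have /memb [_ Gna] := h _ (or_intror erefl).
        case: pG => [[_ _ Gm] nb]; exfalso; apply: nb; rewrite -(meetxC a); exact: Gm.
      - by move/memb => [[_ nb] G0].
    * by rewrite -emb_join joinxC emb_top.
- move=> x [a [[aP aU] ->]].
  exists (fun F => proper_filter F /\ pc (pc a) F); rewrite /bjoin.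
  have -> : (fun G => exists s, (exists2 S, (fun F => proper_filter F /\ pc (pc a) F) S
                 & s = bmeet (Defs.image (@emb d B) S)) /\ s G) = pc (pc a).
    apply: pext => G; split.
    + case=> s [[F [pF xF] ->] [pG hG]]; apply: pc_up xF pG _.
      move=> y Fy; have /memb [_ Gy] := hG (emb y) (ex_intro2 _ _ y Fy erefl); exact: Gy.
    + move=> xG; have pG := pc_proper xG.
      exists (bmeet (Defs.image (@emb d B) G)); split; first by exists G.
      split=> // s [b Gb ->]; apply/memb; split=> //.
  rewrite (ppp aU) //.
- move=> S T h; apply: NNPP => nex.
  pose F : pset B := fun x => exists S0 T0, [/\ (forall x, x \in S0 -> S x),
      (forall y, y \in T0 -> T y) & \meet_(i <- S0) i <= \join_(j <- T0) j `|` x].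
  have pF : proper_filter F.
    split; first split.
    - by exists [::], [::]; split => //; rewrite joinx1 lex1.
    - move=> x y [S0 [T0 [h1 h2 h3]]] xy; exists S0, T0; split=> //.
      apply: le_trans h3 _; exact: leU2.
    - move=> x y [S0 [T0 [h1 h2 h3]]] [S1 [T1 [h1' h2' h3']]].
      exists (S0 ++ S1), (T0 ++ T1); split.
      + by move=> z; rewrite mem_cat => /orP [/h1|/h1'].
      + by move=> z; rewrite mem_cat => /orP [/h2|/h2'].
      + rewrite !big_cat /= joinIr; apply: leI2.
        * apply: le_trans h3 _; apply: leU2 => //; exact: leUl.
        * apply: le_trans h3' _; apply: leU2 => //; exact: leUr.
    - case=> S0 [T0 [h1 h2 h3]]; apply: nex; exists S0, T0; split=> //.
      by rewrite joinx0 in h3.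
  have : bmeet (Defs.image (@emb d B) S) F.
    split=> // s [b Sb ->]; apply/memb; split=> //.
    exists [:: b], [::]; split => //.
    + by move=> z; rewrite inE => /eqP ->.
    + by rewrite big_seq1 big_nil join0x.
  move/h/pcE => [_ hh]; apply: (hh F pF (fun x hx => hx)).
  apply/pcE; split=> // K pK FK [s [[t Tt ->] /memb [_ Kt]]].
  have Knt : K (~` t).
    apply: FK; exists [::], [:: t]; split=> //.
    + by move=> z; rewrite inE => /eqP ->.
    + by rewrite big_nil big_seq1 joinxC.
  case: pK => [[_ _ Km] nb]; apply: nb; rewrite -(meetxC t); exact: Km.
Qed.
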